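(* Let $F$ be a Ferrers diagram, let $(x,y)\in F$, and let $D$ be an effective divisor on $R(F)$. If \[ \deg(D) < \min\{\, \vert U(x,y)\vert - y,\ \vert L(x,y)\vert - x \,\}, \] then $D$ does not have positive rank.
   Context: $\mathbb{N}=\{1,2,3,\dots\}$. A Ferrers diagram is a finite subset $F\subset\mathbb{N}^2$ such that whenever $(x,y)\in F$, either $x=1$ or $(x-1,y)\in F$, and either $y=1$ or $(x,y-1)\in F$; $x$ is the column index and $y$ the row index. The Ferrers rook graph $R(F)$ is the simple graph with vertex set $F$ in which distinct $(x,y),(x',y')$ are adjacent iff $x=x'$ or $y=y'$. For $(x,y)\in F$: $L(x,y)=\{(x',y')\in F : x'\le x\}$ and $U(x,y)=\{(x',y')\in F : y'\le y\}$. Divisors on a graph: functions $D:V\to\mathbb{Z}$, degree $\sum_v D(v)$, effective if all values are $\ge0$; firing a vertex $v$ means $v$ loses $\deg(v)$ chips and each neighbor gains one; divisors are equivalent if related by a sequence of firings; $\vert D\vert$ is the set of effective divisors equivalent to $D$; $D$ has positive rank if for every vertex $v$ some $D'\in\vert D\vert$ has $D'(v)>0$. *)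

(* Defs.v *)
From HB Require Import structures.
From mathcomp Require Import all_boot all_order all_algebra.
From mathcomp Require Import finmap.
From Stdlib Require Import Relations.Relation_Operators.
Set Implicit Arguments. Unset Strict Implicit. Unset Printing Implicit Defensive.
Import Order.TTheory GRing.Theory Num.Theory.
Local Open Scope fset_scope.

(* A Ferrers diagram: a finite subset of N^2 (N = {1,2,...}), given as a finite
   set of pairs (x,y) = (column, row), closed downwards in each coordinate. *)
Definition ferrers (F : {fset (nat * nat)}) : Prop :=
  forall p, p \in F ->
    [/\ (1 <= p.1)%N, (1 <= p.2)%N,
        p.1 = 1%N \/ (p.1.-1, p.2) \in F &
        p.2 = 1%N \/ (p.1, p.2.-1) \in F].

Definition rook_adj (F : {fset (nat * nat)}) (u v : F) : bool :=
  (u != v) && (((val u).1 == (val v).1) || ((val u).2 == (val v).2)).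

Definition vdeg (F : {fset (nat * nat)}) (v : F) : nat :=
  #|[set u : F | rook_adj u v]|.

Definition divisor (F : {fset (nat * nat)}) := {ffun F -> int}.

Definition ddeg (F : {fset (nat * nat)}) (D : divisor F) : int :=
  (\sum_(v : F) D v)%R.

Definition effective (F : {fset (nat * nat)}) (D : divisor F) : Prop :=
  forall v : F, (0 <= D v)%R.

Definition fire (F : {fset (nat * nat)}) (v : F) (D : divisor F) : divisor F :=
  [ffun u => if u == v then (D u - (vdeg v)%:Z)%R
             else if rook_adj u v then (D u + 1)%R else D u].

Definition fires (F : {fset (nat * nat)}) (D D' : divisor F) : Prop :=
  exists v : F, D' = fire v D.

Definition div_equiv (F : {fset (nat * nat)}) : divisor F -> divisor F -> Prop :=
  clos_refl_sym_trans (divisor F) (@fires F).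

Definition positive_rank (F : {fset (nat * nat)}) (D : divisor F) : Prop :=
  forall v : F, exists D' : divisor F,
    [/\ div_equiv D D', effective D' & (0 < D' v)%R].

Definition Lset (F : {fset (nat * nat)}) (x : nat) : {fset (nat * nat)} :=
  [fset p in F | (p.1 <= x)%N].
Definition Uset (F : {fset (nat * nat)}) (y : nat) : {fset (nat * nat)} :=
  [fset p in F | (p.2 <= y)%N].

(* Main.v *)
Require Import Defs.
From HB Require Import structures.
From mathcomp Require Import all_boot all_order all_algebra.
From mathcomp Require Import finmap.
From Stdlib Require Import Relations.Relation_Operators.
From mathcomp Require Import zify ring lra.
From Stdlib Require Import Classical.
Import Order.TTheory GRing.Theory Num.Theory.
Local Open Scope fset_scope.
Local Open Scope ring_scope.
Set Implicit Arguments. Unset Strict Implicit.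

Section Basics.
Variable F : {fset (nat * nat)}.

Definition Lap (g : F -> int) (w : F) : int :=
  \sum_(u : F | rook_adj u w) (g w - g u).

Lemma rook_adjC (u v : F) : rook_adj u v = rook_adj v u.
Proof. by rewrite /rook_adj eq_sym [((val v).1 == _)]eq_sym [((val v).2 == _)]eq_sym. Qed.

Lemma rook_adj_irr (u : F) : rook_adj u u = false.
Proof. by rewrite /rook_adj eqxx. Qed.

Lemma LapD (g1 g2 : F -> int) w :
  Lap (fun u => g1 u + g2 u) w = Lap g1 w + Lap g2 w.
Proof.
rewrite /Lap -big_split /=; apply: eq_bigr => u _; ring.
Qed.

Lemma LapN (g : F -> int) w : Lap (fun u => - g u) w = - Lap g w.
Proof.
rewrite /Lap -sumrN; apply: eq_bigr => u _; ring.
Qed.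

Lemma Lap0 w : Lap (fun _ => 0) w = 0.
Proof. by rewrite /Lap big1 // => u _; rewrite subrr. Qed.

Lemma Lap_sum (g : F -> int) : \sum_(w : F) Lap g w = 0.
Proof.
rewrite /Lap.
under eq_bigr do rewrite sumrB.
rewrite sumrB.
apply/eqP; rewrite subr_eq0; apply/eqP.
rewrite (exchange_big_dep (fun _ => true)) //=.
apply: eq_bigr => i _; apply: eq_bigl => j; by rewrite rook_adjC.
Qed.

Definition evec (v : F) : F -> int := fun u => (u == v)%:Z.

Lemma fire_Lap (v : F) (D : divisor F) w : fire v D w = D w - Lap (evec v) w.
Proof.
rewrite /fire ffunE /Lap /evec.
case: eqP => [->|Hwv].
  rewrite /vdeg.
  rewrite (eq_bigr (fun _ => 1)); last first.
    move=> u Hu; case: eqP => [Huv|]; last by move=> _; rewrite subr0.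
    by rewrite Huv rook_adj_irr in Hu.
  by rewrite sumr_const cardsE pmulrn intz.
case: ifP => Hadj.
  rewrite (bigD1 v) /=; last by rewrite rook_adjC.
  rewrite eqxx big1; last by move=> u /andP [_ /negPf ->].
  by rewrite add0r addr0 opprK.
rewrite big1; first by rewrite subr0.
move=> u Hu; case: eqP => [Huv|]; last by rewrite subrr.
by rewrite Huv rook_adjC Hadj in Hu.
Qed.

Lemma equiv_Lap (D D' : divisor F) : div_equiv D D' ->
  exists g : F -> int, forall w, D' w = D w - Lap g w.
Proof.
elim => {D D'}.
- move=> D D' [v ->]; exists (evec v) => w; exact: fire_Lap.
- move=> D; exists (fun _ => 0) => w; by rewrite Lap0 subr0.
- move=> D D' _ [g Hg]; exists (fun u => - g u) => w.
  by rewrite LapN Hg opprK subrK.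
- move=> D1 D2 D3 _ [g1 H1] _ [g2 H2]; exists (fun u => g1 u + g2 u) => w.
  by rewrite LapD H2 H1 opprD addrA.
Qed.

End Basics.


Section Lines.
Variable F : {fset (nat * nat)}.

Lemma Lap_ge (g : F -> int) (w : F) (S : {set F}) :
  (forall u, g u <= g w) ->
  (forall u, u \in S -> rook_adj u w && (g u < g w)) ->
  (#|S|%:Z <= Lap g w).
Proof.
move=> Hmax HS.
rewrite /Lap (bigID (fun u => u \in S)) /=.
have H2 : 0 <= \sum_(i | rook_adj i w && (i \notin S)) (g w - g i).
  by apply: sumr_ge0 => i _; rewrite subr_ge0.
have -> : \sum_(i | rook_adj i w && (i \in S)) (g w - g i) =
          \sum_(i in S) (g w - g i).
  apply: eq_bigl => i; case HiS: (i \in S); last by rewrite andbF.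
  by rewrite andbT; have /andP[-> _] := HS i HiS.
have H1 : #|S|%:Z <= \sum_(i in S) (g w - g i).
  have -> : #|S|%:Z = \sum_(i in S) (1 : int) by rewrite sumr_const pmulrn intz.
  apply: ler_sum => i HiS; have /andP[_ Hlt] := HS i HiS.
  lia.
by apply: (le_trans H1); rewrite lerDl.
Qed.

Lemma Lap_ge0 (g : F -> int) (w : F) :
  (forall u, g u <= g w) -> 0 <= Lap g w.
Proof. move=> H; by apply: sumr_ge0 => i _; rewrite subr_ge0. Qed.

Definition isline (K : {set F}) :=
  forall u w, u \in K -> w \in K -> u != w -> rook_adj u w.

Lemma line_const (K : {set F}) (T E' g : F -> int) (m : int) :
  isline K -> (forall w, 0 <= T w) -> (forall w, 0 <= E' w) ->
  (forall w, E' w = T w - Lap g w) -> (forall u, g u <= m) ->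
  (exists w, w \in K /\ g w = m) ->
  \sum_(w in K) T w < #|K|%:Z - 1 -> forall w, w \in K -> g w = m.
Proof.
move=> HK HT HE HEq Hm [w0 [Hw0K Hw0]] Hlight w1 Hw1K.
apply/eqP; apply/negPn/negP => Hw1.
pose P := [set u | g u == m].
have HS : w0 \in K :&: P by rewrite inE Hw0K inE Hw0 eqxx.
have HB : w1 \in K :\: P by rewrite inE Hw1K inE Hw1.
have Hcard := cardsID P K.
have HSpos : (0 < #|K :&: P|)%N by apply/card_gt0P; exists w0.
have HBpos : (0 < #|K :\: P|)%N by apply/card_gt0P; exists w1.
have Hsum : \sum_(w in K) T w >= \sum_(w in K :&: P) T w.
  rewrite [X in _ <= X](big_setID P) /= lerDl; by apply: sumr_ge0.
have Hpt : forall w, w \in K :&: P -> #|K :\: P|%:Z <= T w.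
  move=> w; rewrite !inE => /andP [HwK /eqP Hgw].
  have -> : T w = E' w + Lap g w by rewrite HEq subrK.
  have := HE w; suff : #|K :\: P|%:Z <= Lap g w by lia.
  apply: Lap_ge; first by move=> u; rewrite Hgw.
  move=> u; rewrite !inE => /andP [Hgu HuK].
  rewrite Hgw lt_neqAle Hgu Hm andbT.
  rewrite andbT; apply: HK => //; apply/eqP => Huw; by rewrite Huw Hgw eqxx in Hgu.
have Hsum2 : \sum_(w in K :&: P) T w >= \sum_(w in K :&: P) (#|K :\: P|%:Z).
  by apply: ler_sum.
move: Hsum2; rewrite sumr_const -mulr_natr => Hsum2.
have Hc : #|K|%:Z = #|K :&: P|%:Z + #|K :\: P|%:Z by rewrite -Hcard PoszD.
rewrite Hc in Hlight.

nia.
Qed.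

End Lines.


Section Ferrers.
Variable F : {fset (nat * nat)}.
Hypothesis HF : ferrers F.

Definition fcol (c : nat) : {set F} := [set w : F | (val w).1 == c].
Definition frow (r : nat) : {set F} := [set w : F | (val w).2 == r].

Lemma fcol_line c : isline (fcol c).
Proof.
move=> u w; rewrite !inE => /eqP Hu /eqP Hw Huw.
by rewrite /rook_adj Huw Hu Hw eqxx.
Qed.

Lemma frow_line r : isline (frow r).
Proof.
move=> u w; rewrite !inE => /eqP Hu /eqP Hw Huw.
by rewrite /rook_adj Huw Hu Hw eqxx orbT.
Qed.

Lemma F_ge1 (w : F) : (1 <= (val w).1)%N /\ (1 <= (val w).2)%N.
Proof. by have [? ? _ _] := HF (fsvalP w). Qed.

Lemma down1 n a b : ((a + n)%N, b) \in F -> (1 <= a)%N -> (a, b) \in F.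
Proof.
elim: n => [|n IH]; first by rewrite addn0.
move=> H Ha; apply: IH => //.
have [_ _ [H1|H1] _] := HF H; first by (simpl in H1; lia).
by move: H1 => /=; rewrite addnS.
Qed.

Lemma down2 n a b : (a, (b + n)%N) \in F -> (1 <= b)%N -> (a, b) \in F.
Proof.
elim: n => [|n IH]; first by rewrite addn0.
move=> H Hb; apply: IH => //.
have [_ _ _ [H1|H1]] := HF H; first by (simpl in H1; lia).
by move: H1 => /=; rewrite addnS.
Qed.

Lemma down a b a' b' : (a, b) \in F -> (1 <= a' <= a)%N -> (1 <= b' <= b)%N ->
  (a', b') \in F.
Proof.
move=> H /andP[Ha1 Ha2] /andP[Hb1 Hb2].
apply: (@down2 (b - b')%N) => //; rewrite subnKC //.
apply: (@down1 (a - a')%N) => //; by rewrite subnKC.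
Qed.

Lemma partition_sum (k : F -> nat) (P : pred F) (phi : F -> int) n :
  (forall w, (1 <= k w)%N) ->
  \sum_(w | P w && (k w <= n)%N) phi w =
  \sum_(1 <= r < n.+1) \sum_(w | P w && (k w == r)) phi w.
Proof.
move=> Hk; elim: n => [|n IH].
  rewrite big_geq // big_pred0 // => w.
  rewrite leqn0; have := Hk w; case: (k w =P 0%N) => [->|_] //; by rewrite andbF.
rewrite big_nat_recr //= -IH (bigID (fun w => (k w <= n)%N)) /=.
congr (_ + _); apply: eq_bigl => w.
  case: (P w) => //=; case H: (k w <= n)%N; rewrite ?andbF ?andbT //; exact: (leq_trans H).
case: (P w) => //=; rewrite -ltnNge eqn_leq; by rewrite andbC.
Qed.

Lemma card_Lset x : #|` Lset F x| = #|[set w : F | ((val w).1 <= x)%N]|%N.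
Proof.
rewrite -(@card_fsub _ F); last by apply/fsubsetP => p; rewrite !inE => /andP[].
apply: eq_card => w; rewrite !inE /=; by rewrite (fsvalP w).
Qed.

Lemma card_Uset y : #|` Uset F y| = #|[set w : F | ((val w).2 <= y)%N]|%N.
Proof.
rewrite -(@card_fsub _ F); last by apply/fsubsetP => p; rewrite !inE => /andP[].
apply: eq_card => w; rewrite !inE /=; by rewrite (fsvalP w).
Qed.

Lemma card_sumZ (A : {set F}) : #|A|%:Z = \sum_(w in A) 1.
Proof. by rewrite sumr_const pmulrn intz. Qed.

Lemma card_Lset_sum x :
  (#|` Lset F x|%:Z - x%:Z) = \sum_(1 <= c < x.+1) (#|fcol c|%:Z - 1).
Proof.
rewrite card_Lset card_sumZ.
have -> : \sum_(w in [set w : F | ((val w).1 <= x)%N]) (1:int) =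
          \sum_(w : F | true && ((val w).1 <= x)%N) 1.
  by apply: eq_bigl => w; rewrite inE.
rewrite (@partition_sum (fun w => (val w).1)); last by move=> w; case: (F_ge1 w).
rewrite sumrB; congr (_ - _).
  by apply: eq_bigr => c _; rewrite card_sumZ; apply: eq_bigl => w; rewrite inE.
rewrite sumr_const_nat; by rewrite subSS subn0 pmulrn intz.
Qed.

Lemma card_Uset_sum y :
  (#|` Uset F y|%:Z - y%:Z) = \sum_(1 <= r < y.+1) (#|frow r|%:Z - 1).
Proof.
rewrite card_Uset card_sumZ.
have -> : \sum_(w in [set w : F | ((val w).2 <= y)%N]) (1:int) =
          \sum_(w : F | true && ((val w).2 <= y)%N) 1.
  by apply: eq_bigl => w; rewrite inE.
rewrite (@partition_sum (fun w => (val w).2)); last by move=> w; case: (F_ge1 w).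
rewrite sumrB; congr (_ - _).
  by apply: eq_bigr => c _; rewrite card_sumZ; apply: eq_bigl => w; rewrite inE.
rewrite sumr_const_nat; by rewrite subSS subn0 pmulrn intz.
Qed.

End Ferrers.


Lemma exists_max_seq (T : eqType) (h : T -> int) (s : seq T) (w0 : T) :
  w0 \in s -> exists w, w \in s /\ forall u, u \in s -> h u <= h w.
Proof.
elim: s w0 => [//|a s IH] w0 _.
case: s IH => [|b s] IH.
  by exists a; split; [rewrite inE eqxx | move=> u; rewrite inE => /eqP ->].
have [w [Hw Hmax]] := IH b (mem_head _ _).
case: (lerP (h a) (h w)) => Hha.
  exists w; split; first by rewrite inE Hw orbT.
  move=> u; rewrite inE => /orP [/eqP ->|Hu] //; exact: Hmax.
exists a; split; first by rewrite inE eqxx.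
move=> u; rewrite inE => /orP [/eqP ->|Hu] //.
apply: le_trans (Hmax _ Hu) _; exact: ltW.
Qed.

Lemma exists_max (I : finType) (h : I -> int) (P : pred I) (w0 : I) :
  P w0 -> exists w, P w /\ forall u, P u -> h u <= h w.
Proof.
move=> Hw0.
have Hin : w0 \in [seq i <- enum I | P i] by rewrite mem_filter Hw0 mem_enum.
have [w [Hw Hm]] := @exists_max_seq _ h [seq i <- enum I | P i] w0 Hin.
exists w; split; first by move: Hw; rewrite mem_filter => /andP[].
move=> u Hu; apply: Hm; by rewrite mem_filter Hu mem_enum.
Qed.

Lemma Lap_ext (F : {fset (nat*nat)}) (g1 g2 : F -> int) w :
  (forall u, g1 u = g2 u) -> Lap g1 w = Lap g2 w.
Proof. move=> H; rewrite /Lap; apply: eq_bigr => u _; by rewrite !H. Qed.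

Section Main.
Variable F : {fset (nat * nat)}.
Variables (x y : nat) (D : F -> int).
Hypothesis HF : ferrers F.
Hypothesis Hxy : (x, y) \in F.
Hypothesis HD : forall w, 0 <= D w.
Hypothesis HL : \sum_w D w < #|` Lset F x|%:Z - x%:Z.
Hypothesis HU : \sum_w D w < #|` Uset F y|%:Z - y%:Z.

Definition inclass (T : F -> int) :=
  (forall w, 0 <= T w) /\ exists g, forall w, T w = D w - Lap g w.

Lemma class_sum T : inclass T -> \sum_w T w = \sum_w D w.
Proof.
move=> [_ [g Hg]]; under eq_bigr do rewrite Hg.
by rewrite sumrB Lap_sum subr0.
Qed.

Definition light (T : F -> int) c := \sum_(w in @fcol F c) T w < #|@fcol F c|%:Z - 1.

Definition prec (T E : F -> int) := exists g : F -> int,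
  (forall w, E w = T w - Lap g w) /\
  forall c, (1 <= c <= x)%N -> light T c -> forall w, w \in @fcol F c ->
     forall u, g u <= g w.

Lemma prec_trans T E E' : prec T E -> prec E E' -> prec T E'.
Proof.
move=> [g1 [H1 M1]] [g2 [H2 M2]].
exists (fun u => g1 u + g2 u); split.
  by move=> w; rewrite H2 H1 LapD opprD addrA.
move=> c Hc Hl w Hw u.
have HlE : light E c.
  apply: le_lt_trans (Hl); apply: ler_sum => v Hv.
  rewrite H1 lerBlDr lerDl; apply: Lap_ge0 => u'; exact: (M1 c Hc Hl v Hv).
apply: lerD; [exact: (M1 c Hc Hl w Hw) | exact: (M2 c Hc HlE w Hw)].
Qed.

Lemma F_ge1' (w : F) : (1 <= (val w).1)%N /\ (1 <= (val w).2)%N.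
Proof. exact: F_ge1. Qed.

Lemma xy_ge1 : (1 <= x)%N /\ (1 <= y)%N.
Proof. by have [? ? _ _] := HF Hxy. Qed.

Lemma in_grid a b : (1 <= a <= x)%N -> (1 <= b <= y)%N -> (a, b) \in F.
Proof. move=> Ha Hb; exact: (down HF Hxy Ha Hb). Qed.

Lemma light_exists T : inclass T -> exists c, (1 <= c <= x)%N /\ light T c.
Proof.
move=> HT; apply: NNPP => Hno; move: HL.
apply/negP; rewrite -leNgt.
rewrite (card_Lset_sum HF) -(class_sum HT).
apply: le_trans (_ : \sum_(1 <= c < x.+1) \sum_(w in @fcol F c) T w <= _).
  rewrite big_nat [X in _ <= X]big_nat; apply: ler_sum => c Hc.
  case: (leP (#|@fcol F c|%:Z - 1) (\sum_(w in @fcol F c) T w)) => // Hlt.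
  exfalso; apply: Hno; exists c; split; first by rewrite ltnS in Hc.
  exact: Hlt.
have -> : \sum_(1 <= c < x.+1) \sum_(w in @fcol F c) T w =
          \sum_(1 <= c < x.+1) \sum_(w : F | true && ((val w).1 == c)) T w.
  apply: eq_bigr => c _; apply: eq_bigl => w; by rewrite inE.
rewrite -(@partition_sum _ (fun w => (val w).1)); last by move=> w; case: (F_ge1 HF w).
rewrite [X in _ <= X](bigID (fun w : F => ((val w).1 <= x)%N)) /= lerDl.
by apply: sumr_ge0 => w _; case: HT => H _.
Qed.

Lemma light_zero T c : (forall w, 0 <= T w) -> light T c ->
  exists w, w \in @fcol F c /\ T w = 0.
Proof.
move=> HT Hl; apply: NNPP => Hno; move: Hl; apply/negP; rewrite -leNgt.
rewrite card_sumZ; apply: le_trans (_ : \sum_(w in @fcol F c) (1 : int) <= _).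
  by rewrite lerBlDr lerDl.
apply: ler_sum => w Hw; have := HT w; case: (T w =P 0) => [H|H] H0.
  by exfalso; apply: Hno; exists w.
lia.
Qed.


Lemma meet T0 E : inclass T0 -> inclass E ->
  exists T, [/\ inclass T, prec T T0 & prec T E].
Proof.
move=> [HT0 [g0 Hg0]] [HE [g1 Hg1]].
pose f u := g1 u - g0 u.
have HEf : forall w, E w = T0 w - Lap f w.
  move=> w; have -> : Lap f w = Lap g1 w - Lap g0 w by rewrite -LapN -LapD.
  rewrite Hg1 Hg0; ring.
have [Hx1 Hy1] := xy_ge1.
have colmin : forall c, (1 <= c <= x)%N ->
    exists w, w \in @fcol F c /\ forall u, u \in @fcol F c -> f w <= f u.
  move=> c Hc.
  have Hin : (c, 1%N) \in F by apply: in_grid => //; rewrite leqnn Hy1.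
  have Hin' : [` Hin] \in @fcol F c by rewrite inE.
  have [w [Hw Hm]] := @exists_max _ (fun u => - f u) (mem (@fcol F c)) [` Hin] Hin'.
  exists w; split => // u Hu; have := Hm u Hu; lia.
pose Pmin := fun w : F => ((1 <= (val w).1 <= x)%N &&
   [forall u : F, ((val u).1 == (val w).1) ==> (f w <= f u)]).
have colminP : forall c, (1 <= c <= x)%N -> exists w, w \in @fcol F c /\ Pmin w.
  move=> c Hc; have [w [Hw Hm]] := colmin c Hc.
  exists w; split => //; move: Hw; rewrite inE => /eqP Hw.
  apply/andP; split; first by rewrite Hw.
  apply/forallP => u; apply/implyP => /eqP Hu; apply: Hm; by rewrite inE Hu Hw.
have Hc1 : (1 <= 1 <= x)%N by rewrite leqnn Hx1.
have [wa [_ HPa]] := colminP 1%N Hc1.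
have [ws [HPs Hmax]] := @exists_max _ f Pmin wa HPa.
pose tau := f ws.
pose c0 := (val ws).1.
have Hc0 : (1 <= c0 <= x)%N by case/andP: HPs.
have Hb : forall w, w \in @fcol F c0 -> tau <= f w.
  move=> w; rewrite inE => /eqP Hw; case/andP: HPs => _ /forallP H.
  by have /implyP := H w; apply; rewrite Hw.
have Ha : forall c, (1 <= c <= x)%N -> exists w, w \in @fcol F c /\ f w <= tau.
  move=> c Hc; have [w [Hw HP]] := colminP c Hc; exists w; split => //.
  exact: Hmax.
pose p u := if f u <= tau then 0 else f u - tau.
pose q u := if f u <= tau then f u else tau.
have Hpq : forall u, p u + q u = f u.
  by move=> u; rewrite /p /q; case: ifP => _; rewrite ?add0r ?subrK.
pose T w := T0 w - Lap p w.
have HTeff : forall w, 0 <= T w.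
  move=> w; rewrite /T.
  case Hfw : (f w <= tau).
    have : Lap p w <= 0.
      rewrite /Lap; apply: sumr_le0 => u _; rewrite /p Hfw subr_le0.
      case: ifP => Hfu //; move/negbT: Hfu; rewrite -ltNge; lia.
    have := HT0 w; lia.
  have : Lap p w <= Lap f w.
    rewrite /Lap; apply: ler_sum => u _; rewrite /p Hfw.
    case: ifP => Hfu; lia.
  have := HE w; rewrite HEf; lia.
have HpT0 : forall w, T0 w = T w - Lap (fun u => - p u) w.
  by move=> w; rewrite LapN /T opprK subrK.
have HqE : forall w, E w = T w - Lap q w.
  move=> w; rewrite HEf /T -addrA -opprD -LapD; congr (_ - _).
  by apply: Lap_ext => u; rewrite Hpq.
have HTcl : inclass T.
  split => //; exists (fun u => g0 u + p u) => w.
  by rewrite /T Hg0 LapD opprD addrA.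
have Hp0 : forall u, 0 <= p u.
  move=> u; rewrite /p; case: ifP => // Hfu; move/negbT: Hfu; rewrite -ltNge; lia.
have Hqt : forall u, q u <= tau.
  move=> u; rewrite /q; case: ifP => //.
have key : forall c, (1 <= c <= x)%N -> light T c ->
    forall w, w \in @fcol F c -> f w = tau.
  move=> c Hc Hl.
  have Hle : forall w, w \in @fcol F c -> f w <= tau.
    have [wc [Hwc Hfc]] := Ha c Hc.
    have Hp := @line_const F (@fcol F c) T T0 (fun u => - p u) 0 (@fcol_line F c)
      HTeff HT0 HpT0.
    have Hm' : forall u, - p u <= 0 by move=> u; have := Hp0 u; lia.
    have Hex : exists w0, w0 \in @fcol F c /\ - p w0 = 0.
      by exists wc; split => //; rewrite /p Hfc oppr0.
    move=> w Hw; have := Hp Hm' Hex Hl w Hw.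
    rewrite /p; case: ifP => // Hfw /eqP; move/negbT: Hfw; rewrite -ltNge; lia.
  case: (boolP [exists w, (w \in @fcol F c) && (tau <= f w)]).
    case/existsP => w0 /andP[Hw0 Hfw0].
    have Hq := @line_const F (@fcol F c) T E q tau (@fcol_line F c) HTeff HE HqE Hqt.
    have Hex : exists w1, w1 \in @fcol F c /\ q w1 = tau.
      exists w0; split => //; rewrite /q; case: ifP => // H; apply/le_anti; by rewrite H.
    move=> w Hw; apply/le_anti; rewrite Hle //=.
    have := Hq Hex Hl w Hw; rewrite /q; case: ifP => // Hfw.
      by move=> ->.
    by move=> _; move/negbT: Hfw; rewrite -ltNge => /ltW.
  move=> Hno; exfalso.
  have Hlt : forall w, w \in @fcol F c -> f w < tau.
    move=> w Hw; rewrite ltNge; apply/negP => H; move/negP: Hno; apply.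
    by apply/existsP; exists w; rewrite Hw.
  pose A := [set u : F | tau <= f u].
  have HTA : forall w, w \in A -> #|@frow F (val w).2 :\: A|%:Z <= T w.
    move=> w; rewrite inE => HwA.
    have -> : T w = E w + Lap q w by rewrite HqE subrK.
    have := HE w; suff : #|@frow F (val w).2 :\: A|%:Z <= Lap q w by lia.
    have Hqw : q w = tau by rewrite /q; case: ifP => // H; apply/le_anti; rewrite H.
    apply: Lap_ge; first by move=> u; rewrite Hqw.
    move=> u; rewrite !inE -ltNge => /andP [Hfu Hu].
    apply/andP; split.
      apply: (@frow_line F (val w).2); rewrite ?inE //.
      by apply/eqP => Huw; move: Hfu; rewrite Huw ltNge HwA.
    by rewrite Hqw /q (ltW Hfu).
  have HsumT := class_sum HTcl.
  move: HU; rewrite ltNge => /negP; apply; rewrite (card_Uset_sum HF) -HsumT.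
  apply: le_trans (_ : \sum_(w : F | (w \in A) && ((val w).2 <= y)%N) T w <= _); last first.
    rewrite [X in _ <= X](bigID (fun w : F => (w \in A) && ((val w).2 <= y)%N)) /= lerDl.
    by apply: sumr_ge0 => w _.
  rewrite (@partition_sum _ (fun w => (val w).2)); last by move=> w; case: (F_ge1 HF w).
  rewrite big_nat [X in _ <= X]big_nat; apply: ler_sum => r /andP [Hr1 Hr2].
  have Hr : (1 <= r <= y)%N by rewrite Hr1 -ltnS.
  have -> : \sum_(w : F | (w \in A) && ((val w).2 == r)) T w =
            \sum_(w in @frow F r :&: A) T w.
    by apply: eq_bigl => w; rewrite !inE andbC.
  apply: le_trans (_ : \sum_(w in @frow F r :&: A) (#|@frow F r :\: A|%:Z) <= _); last first.
    apply: ler_sum => w; rewrite inE => /andP [Hw HwA].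
    by move: Hw; rewrite inE => /eqP <-; apply: HTA.
  rewrite sumr_const -mulr_natr.
  have Hcard := cardsID A (@frow F r).
  have Hin0 := in_grid Hc0 Hr.
  have Hin1 := in_grid Hc Hr.
  have HSpos : (0 < #|@frow F r :&: A|)%N.
    apply/card_gt0P; exists [` Hin0]; rewrite !inE /= eqxx /=; apply: Hb; by rewrite inE.
  have HBpos : (0 < #|@frow F r :\: A|)%N.
    apply/card_gt0P; exists [` Hin1]; rewrite !inE /= eqxx andbT -ltNge; apply: Hlt; by rewrite inE.
  have Hc' : #|@frow F r|%:Z = #|@frow F r :&: A|%:Z + #|@frow F r :\: A|%:Z
    by rewrite -Hcard PoszD.
  rewrite Hc'; nia.
exists T; split => //.
- exists (fun u => - p u); split => //.
  move=> c Hc Hl w Hw u; have := key c Hc Hl w Hw; rewrite /p => ->; rewrite lexx oppr0.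
  have := Hp0 u; rewrite /p; lia.
- exists q; split => //.
  move=> c Hc Hl w Hw u; have := key c Hc Hl w Hw; rewrite /q => ->; rewrite lexx.
  exact: Hqt.
Qed.

Lemma inclassD : inclass D.
Proof. split => //; exists (fun _ => 0) => w; by rewrite Lap0 subr0. Qed.

Lemma chain (s : seq F) : (forall v : F, exists E, inclass E /\ 0 < E v) ->
  exists T, inclass T /\ forall v, v \in s -> exists E, [/\ inclass E, 0 < E v & prec T E].
Proof.
move=> Hpr; elim: s => [|v s [T [HT Hs]]].
  by exists D; split => //; exact: inclassD.
have [E [HE HEv]] := Hpr v.
have [T' [HT' H1 H2]] := meet HT HE.
exists T'; split => // u; rewrite inE => /orP [/eqP ->|Hu].
  by exists E.
have [E' [HE' HE'u HTE']] := Hs u Hu.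
exists E'; split => //; exact: prec_trans H1 HTE'.
Qed.

Lemma no_rank : ~ (forall v : F, exists E, inclass E /\ 0 < E v).
Proof.
move=> Hpr.
have [T [HT Hall]] := chain (enum (predT : pred F)) Hpr.
have [c [Hc Hl]] := light_exists HT.
have [w [Hw Hw0]] := light_zero (proj1 HT) Hl.
have Hwin : w \in enum (predT : pred F) by rewrite mem_enum.
have [E [HE HEw [g [Hg Hmax]]]] := Hall w Hwin.
have := Hg w; have : 0 <= Lap g w by apply: Lap_ge0 => u; exact: (Hmax c Hc Hl w Hw).
move: HEw; rewrite Hw0; lia.
Qed.

End Main.

Theorem theorem3p4 (F : {fset (nat * nat)}) (x y : nat) (D : divisor F) :
  ferrers F -> (x, y) \in F -> effective D ->
  (ddeg D < Num.min (#|` Uset F y|%:Z - y%:Z) (#|` Lset F x|%:Z - x%:Z))%R ->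
  ~ positive_rank D.
Proof.
move=> HF Hxy HD; rewrite lt_min => /andP [HU HL] Hpr.
apply: (@no_rank F x y (fun w => D w) HF Hxy HD HL HU).
move=> v; have [D' [Heq HD' Hv]] := Hpr v.
exists (fun w => D' w); split => //; split => //.
exact: equiv_Lap Heq.
Qed.
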